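(* Let $\epsilon_1>0$ and $\epsilon_2>0$. For all $r \in \mathbb{R}^3\setminus\{0\}$ and all $f_*\in\mathbb{R}^3$, $$\psi\Big(r, \frac{f_*}{\|r\|^4}\Big) > \|c_1(r,f_* )\|^2 = \big(2 - \operatorname{sgn}(r^{\mathrm T} f_* )^2\big)\,\|c_2(r,f_* )\|^2,$$ where $\psi$, $c_1$, $c_2$ are defined in the context below.
   Context: Notation: $\|\cdot\|$ is the Euclidean norm. For $a=(a_1,a_2,a_3)^{\mathrm T}\in\mathbb{R}^3$, $[a]_\times$ is the skew-symmetric matrix with rows $(0,-a_3,a_2)$, $(a_3,0,-a_1)$, $(-a_2,a_1,0)$, so $[a]_\times b = a\times b$. $\operatorname{sgn}:\mathbb{R}\to\{-1,0,1\}$ is the sign function with $\operatorname{sgn}(0)=0$. Auxiliary scalar: for $r,f_*\in\mathbb{R}^3$, $\Phi_1(r,f_* ) \triangleq \sqrt{\|[r]_\times f_*\|^2 + \|r\|^2\|f_*\|^2}$ and $\Phi_2(r,f_* ) \triangleq \big(2-\operatorname{sgn}(r^{\mathrm T} f_* )^2\big)\Phi_1(r,f_* )$. Function $\psi:\mathbb{R}^3\times\mathbb{R}^3\to\mathbb{R}$ (with the fixed constants $\epsilon_1,\epsilon_2>0$): $$\psi(r,\zeta) \triangleq -\frac{\|r\|^3\, r^{\mathrm T}\zeta}{4}\tanh\Big(\frac{\|r\|^3\, r^{\mathrm T}\zeta}{\epsilon_1}\Big) + \sqrt{\|r\|^6\,\Phi_1(r,\zeta)^2 + \epsilon_2}.$$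 Matrix $R(r,f_* )\in\mathbb{R}^{3\times3}$ (for $r\neq0$): if $[r]_\times f_*\neq0$, its three rows are (the transposes of) $\frac{r}{\|r\|}$, $\frac{(r^{\mathrm T} r) f_* - (r^{\mathrm T} f_* ) r}{\|r\|\,\|[r]_\times f_*\|}$, $\frac{[r]_\times f_*}{\|[r]_\times f_*\|}$; if $[r]_\times f_*=0$, its first row is $r^{\mathrm T}/\|r\|$ and its other two rows are zero. Scalars (evaluated at $(r,f_* )$, $r\ne 0$): $a_x \triangleq -\frac{\operatorname{sgn}(r^{\mathrm T} f_* )}{2}\big(\frac{|r^{\mathrm T} f_*|+\Phi_1}{\|r\|}\big)^{1/2}$, $a_y \triangleq \frac{1}{\sqrt2}\big(\frac{-|r^{\mathrm T} f_*|+\Phi_2}{\|r\|}\big)^{1/2}$, $b_x \triangleq \frac12\big(\frac{|r^{\mathrm T} f_*|+\Phi_2}{\|r\|}\big)^{1/2}$, $b_y \triangleq -\frac{\operatorname{sgn}(r^{\mathrm T} f_* )}{\sqrt2}\big(\frac{-|r^{\mathrm T} f_*|+\Phi_1}{\|r\|}\big)^{1/2}$. With $a(r,f_* )\triangleq(a_x,a_y,0)^{\mathrm T}$ and $b(r,f_* )\triangleq(b_x,b_y,0)^{\mathrm T}$, define $c_1(r,f_* )\triangleq R(r,f_* )^{\mathrm T} a(r,f_* )$ and $c_2(r,f_* )\triangleq R(r,f_* )^{\mathrm T} b(r,f_* )$. *)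

(* Defs.v *)
From Stdlib Require Import Reals Lra.
Open Scope R_scope.

Record vec3 := V3 { v1 : R; v2 : R; v3 : R }.

Definition vzero : vec3 := V3 0 0 0.
Definition vadd (a b : vec3) : vec3 := V3 (v1 a + v1 b) (v2 a + v2 b) (v3 a + v3 b).
Definition vscale (k : R) (a : vec3) : vec3 := V3 (k * v1 a) (k * v2 a) (k * v3 a).
Definition dot (a b : vec3) : R := v1 a * v1 b + v2 a * v2 b + v3 a * v3 b.
Definition norm (a : vec3) : R := sqrt (dot a a).

(* [a]_x b : the skew-symmetric matrix of a, rows (0,-a3,a2),(a3,0,-a1),(-a2,a1,0),
   applied to b (i.e. a x b). *)
Definition skew_mul (a b : vec3) : vec3 :=
  V3 (0 * v1 b + - v3 a * v2 b + v2 a * v3 b)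
     (v3 a * v1 b + 0 * v2 b + - v1 a * v3 b)
     (- v2 a * v1 b + v1 a * v2 b + 0 * v3 b).

Definition sgn (x : R) : R :=
  if Rlt_dec 0 x then 1 else if Rlt_dec x 0 then -1 else 0.

Definition tanh (x : R) : R := (exp x - exp (- x)) / (exp x + exp (- x)).

Definition Phi1 (r f : vec3) : R :=
  sqrt (norm (skew_mul r f) ^ 2 + norm r ^ 2 * norm f ^ 2).
Definition Phi2 (r f : vec3) : R := (2 - sgn (dot r f) ^ 2) * Phi1 r f.

Definition psi (eps1 eps2 : R) (r zeta : vec3) : R :=
  - (norm r ^ 3 * dot r zeta) / 4 * tanh (norm r ^ 3 * dot r zeta / eps1)
  + sqrt (norm r ^ 6 * Phi1 r zeta ^ 2 + eps2).

Record mat3 := M3 { row1 : vec3; row2 : vec3; row3 : vec3 }.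
(* M^T v = v1 * row1 + v2 * row2 + v3 * row3 *)
Definition mulT (M : mat3) (v : vec3) : vec3 :=
  vadd (vadd (vscale (v1 v) (row1 M)) (vscale (v2 v) (row2 M))) (vscale (v3 v) (row3 M)).

Definition Rmat (r f : vec3) : mat3 :=
  let w := skew_mul r f in
  if Req_EM_T (norm w) 0 then
    M3 (vscale (/ norm r) r) vzero vzero
  else
    M3 (vscale (/ norm r) r)
       (vscale (/ (norm r * norm w)) (vadd (vscale (dot r r) f) (vscale (- dot r f) r)))
       (vscale (/ norm w) w).

Definition a_x (r f : vec3) : R :=
  - sgn (dot r f) / 2 * sqrt ((Rabs (dot r f) + Phi1 r f) / norm r).
Definition a_y (r f : vec3) : R :=
  / sqrt 2 * sqrt ((- Rabs (dot r f) + Phi2 r f) / norm r).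
Definition b_x (r f : vec3) : R :=
  / 2 * sqrt ((Rabs (dot r f) + Phi2 r f) / norm r).
Definition b_y (r f : vec3) : R :=
  - sgn (dot r f) / sqrt 2 * sqrt ((- Rabs (dot r f) + Phi1 r f) / norm r).

Definition avec (r f : vec3) : vec3 := V3 (a_x r f) (a_y r f) 0.
Definition bvec (r f : vec3) : vec3 := V3 (b_x r f) (b_y r f) 0.

Definition cvec1 (r f : vec3) : vec3 := mulT (Rmat r f) (avec r f).
Definition cvec2 (r f : vec3) : vec3 := mulT (Rmat r f) (bvec r f).

(* Main.v *)
Require Import Defs.
From Stdlib Require Import Reals Lra.
Open Scope R_scope.

Lemma dot_nn v : 0 <= dot v v.
Proof. destruct v; unfold dot; simpl; nra. Qed.

Lemma norm_sq v : norm v ^ 2 = dot v v.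
Proof. unfold norm; apply pow2_sqrt, dot_nn. Qed.

Lemma norm_nn v : 0 <= norm v.
Proof. apply sqrt_pos. Qed.

Lemma lagrange r f : dot (skew_mul r f) (skew_mul r f) + dot r f ^ 2 = dot r r * dot f f.
Proof. destruct r as [a1 a2 a3], f as [b1 b2 b3]; unfold dot, skew_mul; simpl; ring. Qed.

Lemma sgn_cases p : (sgn p = 1 /\ 0 < p) \/ (sgn p = -1 /\ p < 0) \/ (sgn p = 0 /\ p = 0).
Proof.
  unfold sgn; destruct (Rlt_dec 0 p); [left; auto|].
  destruct (Rlt_dec p 0); [right; left; auto| right; right; split; lra].
Qed.

Lemma sgn_abs p : (1 - sgn p ^ 2) * Rabs p = 0.
Proof.
  destruct (sgn_cases p) as [[-> _]|[[-> _]|[-> ->]]]; try ring.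
  rewrite Rabs_R0; ring.
Qed.

Lemma norm_mulT M x y :
  norm (mulT M (V3 x y 0)) ^ 2 =
  x ^ 2 * dot (row1 M) (row1 M) + 2 * x * y * dot (row1 M) (row2 M)
  + y ^ 2 * dot (row2 M) (row2 M).
Proof.
  rewrite norm_sq; destruct M as [[a b c] [d e g] [h i j]];
  unfold mulT, dot, vadd, vscale; simpl; ring.
Qed.

Lemma norm_R r f x y : 0 < norm r ->
  (norm (skew_mul r f) = 0 -> y = 0) ->
  norm (mulT (Rmat r f) (V3 x y 0)) ^ 2 = x ^ 2 + y ^ 2.
Proof.
  intros hn hy. rewrite norm_mulT. unfold Rmat.
  destruct (Req_EM_T (norm (skew_mul r f)) 0) as [e|e].
  - simpl. rewrite (hy e). assert (H := norm_sq r).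
    destruct r as [v4 v5 v6]; unfold dot, vscale in *; cbn [v1 v2 v3] in *.
    transitivity (x^2 * ((v4*v4+v5*v5+v6*v6) / norm (V3 v4 v5 v6) ^ 2)).
    + field; lra.
    + rewrite <- H; field; lra.
  - simpl. assert (H := norm_sq r). assert (Hw := norm_sq (skew_mul r f)).
    assert (L := lagrange r f).
    set (w := skew_mul r f) in *.
    assert (E1 : dot (vscale (/ norm r) r) (vscale (/ norm r) r) = 1).
    { destruct r as [v4 v5 v6]; unfold dot, vscale in *; cbn [v1 v2 v3] in *.
      transitivity ((v4*v4+v5*v5+v6*v6) / norm (V3 v4 v5 v6) ^ 2).
      + field; lra.
      + rewrite <- H; field; lra. }
    assert (E2 : dot (vscale (/ norm r) r)
       (vscale (/ (norm r * norm w)) (vadd (vscale (dot r r) f) (vscale (- dot r f) r))) = 0).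
    { destruct r as [a1 a2 a3], f as [b1 b2 b3]; unfold dot, vscale, vadd in *; cbn [v1 v2 v3] in *. field; lra. }
    assert (E3 : dot (vscale (/ (norm r * norm w)) (vadd (vscale (dot r r) f) (vscale (- dot r f) r)))
       (vscale (/ (norm r * norm w)) (vadd (vscale (dot r r) f) (vscale (- dot r f) r))) = 1).
    { transitivity ((dot r r * (dot r r * dot f f - dot r f ^ 2)) / (norm r ^ 2 * norm w ^ 2)).
      - destruct r as [a1 a2 a3], f as [b1 b2 b3]; unfold dot, vscale, vadd in *; cbn [v1 v2 v3] in *. field. split; lra.
      - rewrite <- H, Hw. replace (norm r ^ 2 * dot f f - dot r f ^ 2) with (dot w w) by (rewrite H; lra).
        rewrite <- Hw. field. split; lra. }
    rewrite E1, E2, E3. ring.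
Qed.

Lemma Phi1_sq r f : Phi1 r f ^ 2 = dot (skew_mul r f) (skew_mul r f) + dot r r * dot f f.
Proof.
  unfold Phi1. rewrite pow2_sqrt, !norm_sq; [reflexivity|].
  rewrite !norm_sq. assert (H1 := dot_nn (skew_mul r f)).
  assert (H2 := dot_nn r). assert (H3 := dot_nn f). nra.
Qed.

Lemma Phi1_nn r f : 0 <= Phi1 r f.
Proof. apply sqrt_pos. Qed.

Lemma Phi1_scale r f k : Phi1 r (vscale k f) ^ 2 = k ^ 2 * Phi1 r f ^ 2.
Proof.
  rewrite !Phi1_sq. destruct r as [a1 a2 a3], f as [b1 b2 b3]; unfold dot, skew_mul, vscale; cbn [v1 v2 v3]; ring.
Qed.

Lemma tanh_bound x e : x * Defs.tanh (x / e) <= Rabs x.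
Proof.
  unfold Defs.tanh. set (a := exp (x / e)). set (b := exp (- (x / e))).
  assert (ha : 0 < a) by apply exp_pos. assert (hb : 0 < b) by apply exp_pos.
  set (i := / (a + b)). assert (hi : (a + b) * i = 1) by (unfold i; field; lra).
  assert (hi0 : 0 < i) by (unfold i; apply Rinv_0_lt_compat; lra).
  unfold Rdiv. fold i.
  assert (hbi : 0 < b * i) by nra. assert (hai : 0 < a * i) by nra.
  assert (T1 : (a - b) * i <= 1) by nra. assert (T2 : -1 <= (a - b) * i) by nra.
  unfold Rabs; destruct (Rcase_abs x); nra.
Qed.

Lemma absp_le r f : Rabs (dot r f) <= Phi1 r f.
Proof.
  assert (H := Phi1_sq r f). assert (L := lagrange r f).
  assert (H1 := dot_nn (skew_mul r f)). assert (P := Phi1_nn r f).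
  assert (dot r f ^ 2 <= Phi1 r f ^ 2).
  { rewrite H. assert (H2 := dot_nn r). assert (H3 := dot_nn f). nra. }
  unfold Rabs; destruct (Rcase_abs (dot r f)); nra.
Qed.

Lemma sq_sqrt_mul c X : 0 <= X -> (c * sqrt X) ^ 2 = c ^ 2 * X.
Proof. intros h. rewrite Rpow_mult_distr, pow2_sqrt; auto. Qed.

Lemma div_nn a b : 0 <= a -> 0 < b -> 0 <= a / b.
Proof. intros; unfold Rdiv; apply Rmult_le_pos; [auto| left; apply Rinv_0_lt_compat; auto]. Qed.

Theorem proposition4 (eps1 eps2 : R) (h1 : 0 < eps1) (h2 : 0 < eps2)
  (r fs : vec3) (hr : r <> vzero) :
  psi eps1 eps2 r (vscale (/ norm r ^ 4) fs) > norm (cvec1 r fs) ^ 2 /\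
  norm (cvec1 r fs) ^ 2 = (2 - sgn (dot r fs) ^ 2) * norm (cvec2 r fs) ^ 2.
Proof.
  assert (hn : 0 < norm r).
  { assert (hd : 0 < dot r r).
    { destruct r as [a b c]; unfold dot; cbn [v1 v2 v3].
      destruct (Req_dec a 0); destruct (Req_dec b 0); destruct (Req_dec c 0);
        try nra. subst; exfalso; apply hr; reflexivity. }
    assert (H := norm_sq r). assert (H0 := norm_nn r). nra. }
  assert (Hab := absp_le r fs).
  assert (HP := Phi1_nn r fs).
  assert (Hs := sgn_abs (dot r fs)).
  assert (Hsc : sgn (dot r fs) ^ 2 = 1 \/ (sgn (dot r fs) = 0 /\ dot r fs = 0)).
  { destruct (sgn_cases (dot r fs)) as [[-> _]|[[-> _]|[-> ->]]]; [left; ring|left; ring|right; auto]. }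
  assert (Hs2 : 0 <= sgn (dot r fs) ^ 2 <= 1) by (destruct Hsc as [->|[-> _]]; lra).
  assert (HP2 : Phi1 r fs <= Phi2 r fs) by (unfold Phi2; nra).
  assert (Hw : norm (skew_mul r fs) = 0 -> Phi1 r fs = Rabs (dot r fs)).
  { intros e. assert (E := norm_sq (skew_mul r fs)). rewrite e in E.
    assert (H := Phi1_sq r fs). assert (L := lagrange r fs).
    assert (Rabs (dot r fs) ^ 2 = dot r fs ^ 2) by (unfold Rabs; destruct (Rcase_abs (dot r fs)); ring).
    assert (Habs0 := Rabs_pos (dot r fs)).
    assert (Phi1 r fs ^ 2 = Rabs (dot r fs) ^ 2) by nra. nra. }
  assert (Eay : norm (skew_mul r fs) = 0 -> a_y r fs = 0).
  { intros e. unfold a_y, Phi2. rewrite (Hw e).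
    replace (- Rabs (dot r fs) + (2 - sgn (dot r fs) ^ 2) * Rabs (dot r fs)) with 0
      by (rewrite <- Hs; ring).
    unfold Rdiv; rewrite Rmult_0_l, sqrt_0; ring. }
  assert (Eby : norm (skew_mul r fs) = 0 -> b_y r fs = 0).
  { intros e. unfold b_y. rewrite (Hw e).
    replace (- Rabs (dot r fs) + Rabs (dot r fs)) with 0 by ring.
    unfold Rdiv; rewrite Rmult_0_l, sqrt_0; ring. }
  assert (C1 : norm (cvec1 r fs) ^ 2 = a_x r fs ^ 2 + a_y r fs ^ 2).
  { unfold cvec1, avec. apply norm_R; auto. }
  assert (C2 : norm (cvec2 r fs) ^ 2 = b_x r fs ^ 2 + b_y r fs ^ 2).
  { unfold cvec2, bvec. apply norm_R; auto. }
  assert (s2 : sqrt 2 ^ 2 = 2) by (apply pow2_sqrt; lra).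
  assert (s2p : 0 < sqrt 2) by (apply sqrt_lt_R0; lra).
  assert (Ax : a_x r fs ^ 2 = sgn (dot r fs) ^ 2 / 4 * ((Rabs (dot r fs) + Phi1 r fs) / norm r)).
  { unfold a_x. rewrite sq_sqrt_mul; [field; lra|].
    apply div_nn; [|lra]. assert (Habs0 := Rabs_pos (dot r fs)). lra. }
  assert (Ay : a_y r fs ^ 2 = / 2 * ((- Rabs (dot r fs) + Phi2 r fs) / norm r)).
  { unfold a_y. rewrite sq_sqrt_mul. rewrite pow_inv, s2. reflexivity.
    apply div_nn; lra. }
  assert (Bx : b_x r fs ^ 2 = / 4 * ((Rabs (dot r fs) + Phi2 r fs) / norm r)).
  { unfold b_x. rewrite sq_sqrt_mul; [field; lra|].
    apply div_nn; [|lra]. assert (Habs0 := Rabs_pos (dot r fs)). lra. }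
  assert (By : b_y r fs ^ 2 = sgn (dot r fs) ^ 2 / 2 * ((- Rabs (dot r fs) + Phi1 r fs) / norm r)).
  { unfold b_y. rewrite sq_sqrt_mul. replace ((- sgn (dot r fs) / sqrt 2) ^ 2) with
      (sgn (dot r fs) ^ 2 / sqrt 2 ^ 2) by (field; lra). rewrite s2. reflexivity.
    apply div_nn; lra. }
  split.
  - assert (HD : norm r ^ 3 * dot r (vscale (/ norm r ^ 4) fs) = dot r fs / norm r).
    { replace (dot r (vscale (/ norm r ^ 4) fs)) with (/ norm r ^ 4 * dot r fs)
        by (destruct r as [a1 a2 a3], fs as [b1 b2 b3]; unfold dot, vscale; cbn [v1 v2 v3]; ring).
      field; lra. }
    assert (HQ : norm r ^ 6 * Phi1 r (vscale (/ norm r ^ 4) fs) ^ 2 = (Phi1 r fs / norm r) ^ 2).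
    { rewrite Phi1_scale. field; lra. }
    unfold psi. rewrite HD, HQ.
    assert (T := tanh_bound (dot r fs / norm r) eps1).
    assert (RA : Rabs (dot r fs / norm r) = Rabs (dot r fs) / norm r).
    { unfold Rdiv. rewrite Rabs_mult, Rabs_inv, (Rabs_pos_eq (norm r)); lra. }
    rewrite RA in T.
    set (S := sqrt ((Phi1 r fs / norm r) ^ 2 + eps2)).
    assert (HS0 : 0 <= S) by apply sqrt_pos.
    assert (HS2 : S ^ 2 = (Phi1 r fs / norm r) ^ 2 + eps2).
    { apply pow2_sqrt. assert (0 <= (Phi1 r fs / norm r) ^ 2) by (apply pow2_ge_0). lra. }
    assert (HQ0 : 0 <= Phi1 r fs / norm r) by (apply div_nn; lra).
    assert (HSQ : S > Phi1 r fs / norm r) by nra.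
    assert (B1 : - (dot r fs / norm r) / 4 * Defs.tanh (dot r fs / norm r / eps1)
                 >= - (Rabs (dot r fs) / norm r) / 4) by lra.
    rewrite C1, Ax, Ay. unfold Phi2.
    assert (HAn : 0 <= Phi1 r fs / norm r) by (apply div_nn; lra).
    destruct Hsc as [E|[E1 E2]].
    + rewrite E. unfold Rdiv in *. lra.
    + rewrite E1, E2, Rabs_R0 in *. unfold Rdiv in *. lra.
  - rewrite C1, C2, Ax, Ay, Bx, By. unfold Phi2.
    destruct Hsc as [E|[E1 E2]].
    + rewrite E. field. lra.
    + rewrite E1, E2, Rabs_R0. field. lra.
Qed.
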